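(* Let $n\ge 2$ and let $v_1,\dots,v_N\in S^{n-1}$ be unit vectors that are not contained in any closed hemisphere and are in general position in dimension $n$. Let $(P_i)$ be a sequence of polytopes in $\mathcal P(v_1,\dots,v_N)$. If the outer radii $R_i$ of $P_i$ are not uniformly bounded in $i$, then the inner radii $r_i$ of $P_i$ are not uniformly bounded in $i$ either.
   Context: Unit vectors are in general position in dimension $n$ if any $n$ of them are linearly independent. $\mathcal P(v_1,\dots,v_N)$ is the set of polytopes in $\mathbb R^n$ (with nonempty interior) all of whose facet outer unit normals belong to $\{v_1,\dots,v_N\}$; equivalently sets $\{x: x\cdot v_j\le z_j,\ j=1,\dots,N\}$ with nonempty interior. The outer radius of a convex body is the smallest radius of a Euclidean ball containing it; the inner radius is the largest radius of a Euclidean ball contained in it. *)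

(* Defs.v *)
From HB Require Import structures.
From mathcomp Require Import all_boot all_order all_algebra.
From mathcomp Require Import boolp classical_sets reals.
Set Implicit Arguments. Unset Strict Implicit. Unset Printing Implicit Defensive.
Import Order.TTheory GRing.Theory Num.Theory.
Local Open Scope ring_scope.
Local Open Scope classical_set_scope.

Definition dotp (R : realType) (n : nat) (x y : 'I_n -> R) : R :=
  \sum_(i < n) x i * y i.

Definition sqnorm (R : realType) (n : nat) (x : 'I_n -> R) : R := dotp x x.

Definition is_unit_vec (R : realType) (n : nat) (x : 'I_n -> R) : Prop :=
  sqnorm x = 1.

Definition cball (R : realType) (n : nat) (c : 'I_n -> R) (r : R) : set ('I_n -> R) :=
  [set x | sqnorm (fun i => x i - c i) <= r ^+ 2].

Definition not_in_closed_hemisphere (R : realType) (n N : nat) (v : 'I_N -> 'I_n -> R) :=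
  forall u : 'I_n -> R, is_unit_vec u -> exists j : 'I_N, dotp (v j) u < 0.

Definition general_position (R : realType) (n N : nat) (v : 'I_N -> 'I_n -> R) :=
  forall s : 'I_n -> 'I_N, injective s ->
  forall c : 'I_n -> R,
    (forall i : 'I_n, \sum_(k < n) c k * v (s k) i = 0) -> forall k, c k = 0.

Definition has_nonempty_interior (R : realType) (n : nat) (K : set ('I_n -> R)) :=
  exists c : 'I_n -> R, exists r : R, 0 < r /\ cball c r `<=` K.

Definition polyset (R : realType) (n N : nat) (v : 'I_N -> 'I_n -> R) (z : 'I_N -> R)
  : set ('I_n -> R) := [set x | forall j, dotp x (v j) <= z j].

Definition in_Pclass (R : realType) (n N : nat) (v : 'I_N -> 'I_n -> R)
  (K : set ('I_n -> R)) : Prop :=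
  exists z : 'I_N -> R, K = polyset v z /\ has_nonempty_interior K.

Definition outer_radius (R : realType) (n : nat) (K : set ('I_n -> R)) : R :=
  inf [set r : R | 0 <= r /\ exists c, K `<=` cball c r].

Definition inner_radius (R : realType) (n : nat) (K : set ('I_n -> R)) : R :=
  sup [set r : R | 0 <= r /\ exists c, cball c r `<=` K].

(* Main.v *)
Require Import Defs.
From HB Require Import structures.
From mathcomp Require Import all_boot all_order all_algebra.
From mathcomp Require Import boolp classical_sets reals.
From mathcomp Require Import ring lra zify.
Import Order.TTheory GRing.Theory Num.Theory.
Local Open Scope ring_scope.
Set Implicit Arguments. Unset Strict Implicit.
Local Open Scope classical_set_scope.

Section H.
Variables (R : realType) (n : nat).
Implicit Types a b c x y : 'I_n -> R.

Lemma dotpC a b : dotp a b = dotp b a.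
Proof. by apply: eq_bigr => i _; rewrite mulrC. Qed.

Lemma dotp_lin a b (s t : R) c :
  dotp (fun i => s * a i + t * b i) c = s * dotp a c + t * dotp b c.
Proof.
rewrite /dotp !mulr_sumr -big_split /=; apply: eq_bigr => i _; ring.
Qed.

Lemma sqnorm_ge0 a : 0 <= sqnorm a.
Proof. by apply: sumr_ge0 => i _; rewrite -expr2 sqr_ge0. Qed.

Lemma sqnorm_lin a b (s t : R) :
  sqnorm (fun i => s * a i + t * b i)
  = s ^+ 2 * sqnorm a + 2 * s * t * dotp a b + t ^+ 2 * sqnorm b.
Proof.
rewrite /sqnorm /dotp !mulr_sumr -!big_split /=; apply: eq_bigr => i _; ring.
Qed.

Lemma cs_unit a b (r : R) : 0 <= r -> sqnorm a <= r ^+ 2 -> sqnorm b = 1 ->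
  dotp a b <= r.
Proof.
move=> r0 ha hb.
have := sqnorm_ge0 (fun i => 1 * a i + (- dotp a b) * b i).
rewrite sqnorm_lin hb => h.
have h2 : dotp a b ^+ 2 <= r ^+ 2 by nra.
nra.
Qed.

Lemma parallelogram_ball c c' b (r : R) :
  cball c' r (fun i => c i + b i) -> cball c' r (fun i => c i - b i) ->
  sqnorm b <= r ^+ 2.
Proof.
rewrite /cball /=.
have e1 : (fun i => c i + b i - c' i) = (fun i => 1 * (c i - c' i) + 1 * b i).
  by apply: funext => i; ring.
have e2 : (fun i => c i - b i - c' i) = (fun i => 1 * (c i - c' i) + (-1) * b i).
  by apply: funext => i; ring.
rewrite e1 e2 !sqnorm_lin => h1 h2.
have := sqnorm_ge0 (fun i => c i - c' i).
nra.
Qed.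

End H.


Section M.
Variables (R : realType) (n N : nat) (v : 'I_N -> 'I_n -> R).

Definition Amx (s : 'I_n -> 'I_N) : 'M[R]_n := \matrix_(k, i) v (s k) i.
Definition Bmx s := invmx (Amx s)^T.
Definition Ls s : R := \sum_k \sum_i `|Bmx s k i|.
Definition wv s : 'I_n -> R := fun i => (const_mx (-1) *m Bmx s : 'rV[R]_n) 0 i.

Lemma Amx_unit s : general_position v -> injective s -> Amx s \in unitmx.
Proof.
move=> gp inj; rewrite unitmxE unitfE; apply/negP => /det0P [w wn0 hw].
case/eqP: wn0; apply/matrixP => a k; rewrite ord1 mxE.
apply: (gp s inj (fun k => w 0 k)) => i.
have := congr1 (fun M : 'rV[R]_n => M 0 i) hw; rewrite !mxE => h.
apply: etrans h; by apply: eq_bigr => k' _; rewrite mxE.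
Qed.

Lemma AmxT_unit s : general_position v -> injective s -> (Amx s)^T \in unitmx.
Proof. by move=> gp inj; rewrite unitmx_tr; apply: Amx_unit. Qed.

Lemma Ls_ge0 s : 0 <= Ls s.
Proof. by apply: sumr_ge0 => k _; apply: sumr_ge0 => i _. Qed.

Lemma le_sum_term (I : finType) (F : I -> R) j :
  (forall i, 0 <= F i) -> F j <= \sum_i F i.
Proof.
move=> h; rewrite (bigD1 j) //= lerDl; apply: sumr_ge0 => i _; exact: h.
Qed.

Lemma coord_bound s (d : 'I_n -> R) i : general_position v -> injective s ->
  `|d i| <= Ls s * \sum_k `|dotp d (v (s k))|.
Proof.
move=> gp inj.
pose D : 'rV[R]_n := \row_i d i.
have hD : D = (D *m (Amx s)^T) *m Bmx s by rewrite mulmxK //; apply: AmxT_unit.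
have -> : d i = D 0 i by rewrite mxE.
rewrite hD mxE mulr_sumr.
apply: le_trans (ler_norm_sum _ _ _) _.
apply: ler_sum => k _.
have -> : (D *m (Amx s)^T) 0 k = dotp d (v (s k)).
  rewrite mxE; apply: eq_bigr => i' _; rewrite !mxE //.
rewrite normrM mulrC ler_wpM2r //.
have h1 := @le_sum_term _ (fun i => `|Bmx s k i|) i (fun _ => normr_ge0 _).
have h2 := @le_sum_term _ (fun k => \sum_i `|Bmx s k i|) k
  (fun k => sumr_ge0 _ (fun i _ => normr_ge0 (Bmx s k i))).
exact: le_trans h1 h2.
Qed.

Lemma wv_prop s k : general_position v -> injective s ->
  dotp (wv s) (v (s k)) = -1.
Proof.
move=> gp inj.
have h : ((const_mx (-1) : 'rV[R]_n) *m Bmx s) *m (Amx s)^T = const_mx (-1).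
  by rewrite mulmxKV //; apply: AmxT_unit.
have := congr1 (fun M : 'rV[R]_n => M 0 k) h; rewrite !mxE => <-.
by rewrite /dotp /wv; apply: eq_bigr => i _; rewrite !mxE.
Qed.

End M.


Section K.
Variables (R : realType) (n N : nat) (v : 'I_N -> 'I_n -> R).

Lemma ker_vec : (N < n)%N ->
  exists u : 'I_n -> R, 0 < sqnorm u /\ forall j, dotp u (v j) = 0.
Proof.
move=> hN.
pose V : 'M[R]_(n, N) := \matrix_(i, j) v j i.
have hr : (0 < \rank (kermx V))%N.
  rewrite mxrank_ker; have := rank_leq_col V; lia.
have : kermx V != 0 by rewrite -mxrank_eq0 -lt0n.
case/eqP/matrixP/boolp.existsNP => a /boolp.existsNP [b hab].
exists (fun i => kermx V a i); split.
  have hne : kermx V a b != 0 by apply/eqP; move: hab; rewrite [X in _ <> X]mxE.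
  rewrite /sqnorm /dotp (bigD1 b) //=.
  have h1 : 0 < kermx V a b * kermx V a b.
    by rewrite lt_def mulf_neq0 //= -expr2 sqr_ge0.
  apply: (lt_le_trans h1); rewrite lerDl; apply: sumr_ge0 => i _.
  by rewrite -expr2 sqr_ge0.
move=> j; have := congr1 (fun M : 'M[R]_(n, N) => M a j) (mulmx_ker V).
rewrite mxE [X in _ = X -> _]mxE => h; apply: etrans h.
rewrite /dotp.
by apply: eq_bigr => i _; rewrite [V _ _]mxE.
Qed.

Lemma select (p : 'I_N -> R) : (n <= N)%N ->
  exists s : {ffun 'I_n -> 'I_N}, injective s /\
    forall j, (forall k, s k != j) -> forall k, p (s k) <= p j.
Proof.
move=> hnN.
pose s0 : {ffun 'I_n -> 'I_N} := [ffun i => widen_ord hnN i].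
have Ps0 : injectiveb s0.
  apply/injectiveP => a b; rewrite !ffunE => /(congr1 val) /= h; exact: val_inj.
pose F := fun f : {ffun 'I_n -> 'I_N} => \sum_k p (f k).
case: (@Order.TotalTheory.arg_minP _ _ _ s0 (fun f : {ffun 'I_n -> 'I_N} => injectiveb f) F Ps0) => s /injectiveP Ps Hmin.
exists s; split => // j hj k; rewrite leNgt; apply/negP => hlt.
pose s' : {ffun 'I_n -> 'I_N} := [ffun i => if i == k then j else s i].
have Ps' : injectiveb s'.
  apply/injectiveP => a b; rewrite !ffunE.
  case: eqP => [-> | ak]; case: eqP => [-> | bk] //.
  - by move=> e; move: (hj b); rewrite e eqxx.
  - by move=> e; move: (hj a); rewrite e eqxx.
  - exact: Ps.
have := Hmin s' Ps'; rewrite /F (bigD1 k) //= [X in _ <= X](bigD1 k) //= ffunE eqxx.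
have -> : \sum_(i < n | i != k) p (s' i) = \sum_(i < n | i != k) p (s i).
  by apply: eq_bigr => i /negbTE ik; rewrite ffunE ik.
rewrite lerD2r => h.
by move: (lt_le_trans hlt h); rewrite ltxx.
Qed.

End K.


Section Key.
Variables (R : realType) (n N : nat) (v : 'I_N -> 'I_n -> R).

Definition Lc : R := 1 + \sum_(f : {ffun 'I_n -> 'I_N}) Ls v f.
Definition Wc : R := 1 + \sum_(f : {ffun 'I_n -> 'I_N}) \sum_j `|dotp (wv v f) (v j)|.

Lemma Lc_ge1 : 1 <= Lc.
Proof. by rewrite lerDl; apply: sumr_ge0 => f _; apply: Ls_ge0. Qed.
Lemma Wc_ge1 : 1 <= Wc.
Proof. by rewrite lerDl; apply: sumr_ge0 => f _; apply: sumr_ge0. Qed.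


Lemma Ls_le (f : {ffun 'I_n -> 'I_N}) : Ls v f <= Lc.
Proof.
have h := le_sum_term (F:=fun f : {ffun 'I_n -> 'I_N} => Ls v f) f (fun g => Ls_ge0 v g).
rewrite /Lc; lra.
Qed.

Lemma W_le (f : {ffun 'I_n -> 'I_N}) j : `|dotp (wv v f) (v j)| + 1 <= Wc.
Proof.
have h1 := le_sum_term (F:=fun j => `|dotp (wv v f) (v j)|) j (fun _ => normr_ge0 _).
have h2 := le_sum_term (F:=fun f : {ffun 'I_n -> 'I_N} => \sum_j `|dotp (wv v f) (v j)|) f
  (fun g => sumr_ge0 _ (fun j _ => normr_ge0 (dotp (wv v g) (v j)))).
rewrite /Wc; lra.
Qed.

Lemma ball_in (z : 'I_N -> R) c t : 0 <= t -> (forall j, is_unit_vec (v j)) ->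
  (forall j, dotp c (v j) + t <= z j) -> cball c t `<=` polyset v z.
Proof.
move=> t0 hu h x hx j.
have e : x = (fun i => 1 * c i + 1 * (x i - c i)) by apply: funext => i; ring.
rewrite e dotp_lin !mul1r.
have := cs_unit t0 hx (hu j).
have := h j; lra.
Qed.

Lemma key (z : 'I_N -> R) x y i : (n <= N)%N -> (0 < n)%N ->
  general_position v -> (forall j, is_unit_vec (v j)) ->
  polyset v z x -> polyset v z y ->
  exists c, cball c (`|x i - y i| / (4 * n%:R * Lc * Wc)) `<=` polyset v z.
Proof.
move=> hnN hn gp hu hx hy.
pose d := fun i => 1 * x i + (-1) * y i.
pose p := fun j => `|dotp d (v j)|.
have [s [sinj smin]] := select p hnN.
pose t := `|x i - y i| / (4 * n%:R * Lc * Wc).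
have nR : 1 <= (n%:R : R) by rewrite ler1n.
have L1 := Lc_ge1; have W1 := Wc_ge1.
have den0 : 0 < 4 * n%:R * Lc * Wc.
  by apply: mulr_gt0; [apply: mulr_gt0; [apply: mulr_gt0|]|]; lra.
have t0 : 0 <= t by apply: divr_ge0; [exact: normr_ge0 | lra].
have tW : t * (4 * n%:R * Lc * Wc) = `|x i - y i|.
  by rewrite /t mulfVK //; apply/eqP => e; move: den0; rewrite e ltxx.
exists (fun k => 1 * ((1/2) * x k + (1/2) * y k) + t * wv v s k).
apply: ball_in => // j.
rewrite dotp_lin dotp_lin mul1r.
rewrite -/t.
case: (boolp.pselect (exists k, s k = j)) => [[k <-]|nj].
  have := hx (s k); have := hy (s k).
  rewrite wv_prop //; lra.
have hxj := hx j; have hyj := hy j.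
have hdj : dotp d (v j) = dotp x (v j) - dotp y (v j) by rewrite /d dotp_lin; ring.
have nj' : forall k, s k != j by move=> k; apply/eqP => e; apply: nj; exists k.
have hs := smin j nj'.
have hsum : \sum_k p (s k) <= n%:R * p j.
  apply: le_trans (ler_sum _ (fun k _ => hs k)) _.
  by rewrite sumr_const card_ord mulr_natl.
have hcb := coord_bound d i gp sinj.
have hdi : d i = x i - y i by rewrite /d; ring.
rewrite hdi in hcb.
have hLs := Ls_le s.
have hLs0 := Ls_ge0 v s.
have hS0 : 0 <= \sum_k p (s k) by apply: sumr_ge0 => k _; apply: normr_ge0.
have hb1 : `|x i - y i| <= Lc * (n%:R * p j).
  apply: le_trans hcb _.
  apply: le_trans (ler_wpM2l hLs0 hsum) _.
  apply: ler_wpM2r => //; apply: mulr_ge0; [lra | exact: normr_ge0].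
have hW := W_le s j.
set Wv := dotp (wv v s) (v j) in hW *.
set X := dotp x (v j) in hxj hdj *.
set Y := dotp y (v j) in hyj hdj *.
have hpj : p j = `|X - Y| by rewrite /p hdj.
rewrite hpj in hb1.
have hWv : t * Wv + t <= t * Wc.
  have := ler_norm Wv; nra.
have nL0 : 0 < n%:R * Lc by apply: mulr_gt0; lra.
have h4 : 4 * (t * Wc) <= `|X - Y|.
  have e : (4 * (t * Wc)) * (n%:R * Lc) = `|x i - y i| by rewrite -tW; ring.
  have : (4 * (t * Wc)) * (n%:R * Lc) <= `|X - Y| * (n%:R * Lc) by rewrite e; lra.
  by rewrite ler_pM2r.
have hXY : `|X - Y| <= (z j - X) + (z j - Y).
  rewrite ler_norml; apply/andP; split; lra.
lra.
Qed.
End Key.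


Lemma sqnorm_scale (R : realType) n (t : R) (u : 'I_n -> R) :
  sqnorm (fun i => t * u i) = t ^+ 2 * sqnorm u.
Proof. by rewrite /sqnorm /dotp mulr_sumr; apply: eq_bigr => i _; ring. Qed.

Lemma outer_empty (R : realType) n (K : set ('I_n -> R)) :
  (forall r c, 0 <= r -> ~ (K `<=` cball c r)) -> outer_radius K = 0.
Proof.
move=> h; rewrite /outer_radius.
have -> : [set r : R | 0 <= r /\ exists c, K `<=` cball c r] = set0.
  apply/funext => r; apply/propext; split => //= -[r0 [c hc]]; exact: h r c r0 hc.
exact: inf0.
Qed.

Lemma ball_pm (R : realType) n (c c' b : 'I_n -> R) r (K : set ('I_n -> R)) :
  K (fun i => c i + b i) -> K (fun i => c i - b i) -> K `<=` cball c' r ->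
  sqnorm b <= r ^+ 2.
Proof. move=> h1 h2 hK; apply: parallelogram_ball; [exact: hK h1 | exact: hK h2]. Qed.

Unset Implicit Arguments.
Local Close Scope classical_set_scope.
Theorem lemma3p4 (R : realType) (n N : nat) (v : 'I_N -> 'I_n -> R)
  (P : nat -> set ('I_n -> R)) :
  (2 <= n)%N ->
  (forall j, is_unit_vec (v j)) ->
  not_in_closed_hemisphere v ->
  general_position v ->
  (forall i, in_Pclass v (P i)) ->
  ~ (exists M : R, forall i, outer_radius (P i) <= M) ->
  ~ (exists M : R, forall i, inner_radius (P i) <= M).
Proof.
Local Open Scope classical_set_scope.
move=> hn hu _ gp hP hout [M hM]; apply: hout.
pose K := 4 * n%:R * Lc v * Wc v * `|M|.
have nR : 1 <= (n%:R : R) by rewrite ler1n; lia.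
have K0 : 0 <= K.
  rewrite /K; apply: mulr_ge0 => //; have := Lc_ge1 v; have := Wc_ge1 v.
  move=> h1 h2; apply: mulr_ge0; [apply: mulr_ge0; [lra|lra]|lra].
exists (n%:R * K) => i.
have nK0 : 0 <= n%:R * K by apply: mulr_ge0 => //; lra.
have [z [ePz [c0 [r0 [r0pos hball]]]]] := hP i.
have x0P : P i c0.
  apply: hball; rewrite /cball /=.
  have -> : (fun i => c0 i - c0 i) = (fun i => 0 * c0 i) by apply: funext => k; ring.
  rewrite sqnorm_scale; have := sqnorm_ge0 c0; nra.
have [hNn | hnN] := ltnP N n.
  have [u [su0 hu0]] := ker_vec v hNn.
  set su := sqnorm u in su0.
  rewrite outer_empty // => r c r0' hsub.
  pose t := (r ^+ 2 + 1) * (1 + su^-1).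
  have inP : forall s : R, P i (fun k => 1 * c0 k + s * u k).
    move=> s; rewrite ePz => j; rewrite dotp_lin hu0.
    move: x0P; rewrite ePz => /(_ j); lra.
  have := ball_pm (b := fun k => t * u k) (c := c0) (c' := c) _ _ hsub.
  rewrite sqnorm_scale.
  have e1 : (fun k => c0 k + t * u k) = (fun k => 1 * c0 k + t * u k)
    by apply: funext => k; ring.
  have e2 : (fun k => c0 k - t * u k) = (fun k => 1 * c0 k + (- t) * u k)
    by apply: funext => k; ring.
  rewrite e1 e2 => /(_ (inP _) (inP _)) h.
  have hsu : su * su^-1 = 1 by rewrite mulfV //; apply/eqP => e; move: su0; rewrite e ltxx.
  have ht1 : 1 <= t * su.
    have sn0 : su != 0 by apply/eqP => e; move: su0; rewrite e ltxx.
    have e : (1 + su^-1) * su = su + 1 by rewrite mulrDl mul1r mulVf.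
    rewrite /t -mulrA e.
    have := sqr_ge0 r; nra.
  have ht2 : r ^+ 2 + 1 <= t.
    rewrite /t; have : 0 <= su^-1 by rewrite invr_ge0; lra.
    have := sqr_ge0 r; nra.
  have tpos : 0 <= t by have := sqr_ge0 r; lra.
  have : t * 1 <= t * (t * su) by rewrite ler_wpM2l.
  have : t ^+ 2 * su = t * (t * su) by ring.
  fold su in h; lra.
have n0 : (0 < n)%N by lia.
have j0 : 'I_N by exists 0%N; lia.
set Sin := [set r : R | 0 <= r /\ exists c, cball c r `<=` P i].
have [hub | hnub] := pselect (has_ubound Sin); last first.
  rewrite outer_empty // => r c r0' hsub.
  have [rho Srho rr] : exists2 rho, Sin rho & r < rho.
    case: (pselect (exists2 rho, Sin rho & r < rho)) => // hne; exfalso.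
    apply: hnub; exists r => y Sy.
    rewrite leNgt; apply/negP => lt; apply: hne; by exists y.
  case: Srho => rho0 [c1 hc1].
  have := ball_pm (b := fun k => rho * v j0 k) (c := c1) (c' := c) _ _
    (subset_trans hc1 hsub).
  rewrite sqnorm_scale hu mulr1.
  have e1 : (fun k => c1 k + rho * v j0 k - c1 k) = (fun k => rho * v j0 k)
    by apply: funext => k; ring.
  have e2 : (fun k => c1 k - rho * v j0 k - c1 k) = (fun k => (- rho) * v j0 k)
    by apply: funext => k; ring.
  rewrite /cball /= e1 e2 !sqnorm_scale hu !mulr1 sqrrN lexx => /(_ isT isT).
  nra.
have hxy : forall x y k, P i x -> P i y -> `|x k - y k| <= K.
  move=> x y k hx hy; rewrite ePz in hx hy.
  have [c hc] := key k hnN n0 gp hu hx hy.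
  set t := `|x k - y k| / _ in hc.
  have L1 := Lc_ge1 v; have W1 := Wc_ge1 v.
  have den0 : 0 < 4 * n%:R * Lc v * Wc v.
    by apply: mulr_gt0; [apply: mulr_gt0; [apply: mulr_gt0|]|]; lra.
  have t0 : 0 <= t by apply: divr_ge0; [exact: normr_ge0 | lra].
  have St : Sin t by split => //; exists c; rewrite ePz.
  have htM : t <= M by apply: le_trans (hM i); exact: ub_le_sup.
  have tW : t * (4 * n%:R * Lc v * Wc v) = `|x k - y k|.
    by rewrite /t mulfVK //; apply/eqP => e; move: den0; rewrite e ltxx.
  rewrite -tW /K.
  have := ler_norm M.
  nra.
have hsub : P i `<=` cball c0 (n%:R * K).
  move=> x hx; rewrite /cball /sqnorm /dotp /=.
  apply: le_trans (_ : \sum_(k < n) K * K <= _).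
    apply: ler_sum => k _; have h := hxy x c0 k hx x0P.
    have e : (x k - c0 k) * (x k - c0 k) = `|x k - c0 k| * `|x k - c0 k|.
      by rewrite -normrM ger0_norm // -expr2 sqr_ge0.
    rewrite e; have := normr_ge0 (x k - c0 k); nra.
  rewrite sumr_const card_ord -mulr_natl expr2.
  nra.
have hlb : has_lbound [set r : R | 0 <= r /\ exists c, P i `<=` cball c r].
  by exists 0 => r [].
apply: (ge_inf hlb); split => //; exists c0; exact: hsub.
Qed.
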